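(* Consider $\tau=t^3$ on Minkowski space $\mathbb{M}^{n+1}=(\mathbb{R}\times\mathbb{R}^n,-dt^2+\sum_i(dx^i)^2)$. Then: (1) $\hat{d}_\tau$ fails to be definite; in particular, for any two points $p,q$ in the slice $\{t=0\}$, $\hat{d}_\tau(p,q)=0$; (2) $\hat{d}_\tau$ fails to encode the causal structure; in particular, for any two points $p=(t_p,p_S)$ and $q=(t_q,q_S)$ with $t_p<0<t_q$, we have $\hat{d}_\tau(p,q)=\tau(q)-\tau(p)$.
   Context: Minkowski space is time-oriented by $\partial_t$; $\tau=t^3$ is strictly increasing along future causal curves. A piecewise causal curve $\beta:[a,b]\to M$ has a partition $a=s_0<\dots<s_k=b$ with each restriction a smooth future or past causal curve (all tangents, including one-sided ones, future or past pointing causal); its null length is $\hat{L}_\tau(\beta)=\sum_i|\tau(\beta(s_i))-\tau(\beta(s_{i-1}))|$, and $\hat{d}_\tau(p,q)=\inf\{\hat{L}_\tau(\beta):\beta$ piecewise causal from $p$ to $q\}$. *)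

(* Defs.v *)
From HB Require Import structures.
From mathcomp Require Import all_boot all_order all_algebra.
From mathcomp Require Import all_classical all_reals all_analysis.
Set Implicit Arguments. Unset Strict Implicit. Unset Printing Implicit Defensive.
Import Order.TTheory GRing.Theory Num.Theory.
Local Open Scope classical_set_scope.
Local Open Scope ring_scope.

Definition mpoint (R : realType) (n : nat) : Type := (R * ('I_n -> R))%type.

Definition tau (R : realType) (n : nat) (p : mpoint R n) : R := p.1 ^+ 3.

Definition smooth_fun (R : realType) (g : R -> R) : Prop :=
  forall (k : nat) (x : R), derivable (derive1n k g) x 1.

(* beta restricted to [a,b] is a smooth future (fut = true) or past (fut = false)
   causal curve: each coordinate agrees on [a,b] with a smooth function on R
   (so that all tangents, including the one-sided ones at the endpoints, are
   given by the derivatives of these extensions), and every tangent vector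
   (v0, v) satisfies |v|^2 <= v0^2 with v0 > 0 (future) resp. v0 < 0 (past).
   (The sign condition on v0 makes the vector nonzero.) *)
Definition smooth_causal_piece (R : realType) (n : nat)
    (beta : R -> mpoint R n) (a b : R) (fut : bool) : Prop :=
  exists (gt : R -> R) (gx : 'I_n -> R -> R),
    smooth_fun gt /\ (forall i, smooth_fun (gx i)) /\
    (forall s, a <= s <= b -> (beta s).1 = gt s /\ forall i, (beta s).2 i = gx i s) /\
    (forall s, a <= s <= b ->
       \sum_(i < n) (derive1 (gx i) s) ^+ 2 <= (derive1 gt s) ^+ 2 /\
       (if fut then 0 < derive1 gt s else derive1 gt s < 0)).

Definition piecewise_causal (R : realType) (n : nat) (beta : R -> mpoint R n)
    (a b : R) (k : nat) (s : nat -> R) : Prop :=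
  a < b /\ s 0%N = a /\ s k = b /\
  (forall i, (i < k)%N -> s i < s i.+1) /\
  (forall i, (i < k)%N -> exists fut, smooth_causal_piece beta (s i) (s i.+1) fut).

Definition null_length (R : realType) (n : nat) (beta : R -> mpoint R n)
    (k : nat) (s : nat -> R) : R :=
  \sum_(i < k) `| tau (beta (s i.+1)) - tau (beta (s i)) |.

Definition dhat (R : realType) (n : nat) (p q : mpoint R n) : R :=
  inf [set L : R | exists (beta : R -> mpoint R n) (a b : R) (k : nat) (s : nat -> R),
         piecewise_causal beta a b k s /\ beta a = p /\ beta b = q /\
         L = null_length beta k s].

(* Main.v *)
Require Import Defs.
From HB Require Import structures.
From mathcomp Require Import all_boot all_order all_algebra.
From mathcomp Require Import all_classical all_reals all_analysis.
From mathcomp Require Import ring lra zify.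
Import Order.TTheory GRing.Theory Num.Theory.
Local Open Scope classical_set_scope.
Local Open Scope ring_scope.
Section S.
Variable R : realType.
Variable n : nat.

Definition lin (a b c : R) : R -> R := fun s => a + (s - b) * c.

Lemma lin_der (a b c x : R) : is_derive x 1 (lin a b c) c.
Proof.
have H := is_deriveD (is_derive_cst a x 1) (is_deriveM (is_deriveB (is_derive_id x (1:R)) (is_derive_cst b x 1)) (is_derive_cst c x 1)).
rewrite /= scaler0 add0r subr0 add0r in H.
move: H.
rewrite [X in is_derive _ _ _ X -> _](_ : _ = c); last by rewrite /GRing.scale /= mulr1.
exact.
Qed.

Lemma lin_derive1 a b c : derive1 (lin a b c) = cst c.
Proof. apply: funext => x; rewrite derive1E; exact: (derive_val (is_derive := lin_der a b c x)). Qed.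

Lemma iter_cst k (c : R) : exists d : R, iter k (@derive1 _ _) (cst c : R -> R) = cst d.
Proof.
elim: k c => [|k IH] c; first by exists c.
rewrite iterSr.
have -> : derive1 (cst c : R -> R) = cst 0 by ( apply: funext => x; rewrite derive1E; exact: derive_val).
exact: IH.
Qed.

Lemma lin_smooth a b c : smooth_fun (lin a b c).
Proof.
move=> [|k] x.
  by apply: ex_derive; exact: lin_der.
rewrite /derive1n iterSr lin_derive1.
have [d ->] := iter_cst k c.
exact: derivable_cst.
Qed.


Definition interp (P : nat -> mpoint R n) (s : R) : mpoint R n :=
  let j := Num.truncn s in
  (lin (P j).1 j%:R ((P j.+1).1 - (P j).1) s,
   fun i => lin ((P j).2 i) j%:R ((P j.+1).2 i - (P j).2 i) s).

Lemma lin_base a b c : lin a b c b = a.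
Proof. by rewrite /lin subrr mul0r addr0. Qed.

Lemma lin_end (a a' : R) j : lin a j%:R (a' - a) j.+1%:R = a'.
Proof. rewrite /lin -addn1 natrD addrAC subrr add0r mul1r. ring. Qed.

Lemma interp_nat P j : interp P j%:R = P j.
Proof.
rewrite /interp natrK !lin_base.
have -> : (fun i : 'I_n => lin ((P j).2 i) j%:R ((P j.+1).2 i - (P j).2 i) j%:R) = (P j).2 by apply: funext => i; rewrite lin_base.
by case: (P j).
Qed.

Lemma interp_on P j s : j%:R <= s <= j.+1%:R ->
  (interp P s).1 = lin (P j).1 j%:R ((P j.+1).1 - (P j).1) s /\
  forall i, (interp P s).2 i = lin ((P j).2 i) j%:R ((P j.+1).2 i - (P j).2 i) s.
Proof.
move=> /andP[h1 h2].
have [hlt|hge] := ltP s j.+1%:R.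
  rewrite /interp; have -> : Num.truncn s = j by apply: Num.Theory.truncn_def; rewrite h1 hlt.
  by [].
have -> : s = j.+1%:R by apply/eqP; rewrite eq_le h2 hge.
rewrite interp_nat lin_end; split => // i; by rewrite lin_end.
Qed.

Definition causal_step (u v : mpoint R n) : Prop :=
  u.1 != v.1 /\ \sum_(i < n) (v.2 i - u.2 i) ^+ 2 <= (v.1 - u.1) ^+ 2.

Lemma polygon P k : (0 < k)%N ->
  (forall i, (i < k)%N -> causal_step (P i) (P i.+1)) ->
  piecewise_causal (interp P) 0 k%:R k (fun i => i%:R).
Proof.
move=> k0 hc; split; first by rewrite ltr0n.
split; first by [].
split; first by [].
split; first by move=> i _; rewrite ltr_nat.
move=> i /hc [hne hs].
exists (0 < (P i.+1).1 - (P i).1).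
exists (lin (P i).1 i%:R ((P i.+1).1 - (P i).1)).
exists (fun j => lin ((P i).2 j) i%:R ((P i.+1).2 j - (P i).2 j)).
split; first exact: lin_smooth.
split; first by move=> j; exact: lin_smooth.
split; first by move=> s hs'; exact: interp_on.
move=> s _; rewrite lin_derive1 /=.
split.
  by under eq_bigr => j _ do rewrite lin_derive1.
have : (P i.+1).1 - (P i).1 != 0 by rewrite subr_eq0 eq_sym.
case: ltP => //= hle hne'.
by rewrite lt_neqAle hne' hle.
Qed.

Definition Aset (p q : mpoint R n) : set R :=
  [set L : R | exists (beta : R -> mpoint R n) (a b : R) (k : nat) (s : nat -> R),
         piecewise_causal beta a b k s /\ beta a = p /\ beta b = q /\
         L = null_length beta k s].

Lemma dhatE p q : dhat p q = inf (Aset p q).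
Proof. by []. Qed.

Lemma poly_mem P k : (0 < k)%N ->
  (forall i, (i < k)%N -> causal_step (P i) (P i.+1)) ->
  Aset (P 0%N) (P k) (\sum_(i < k) `|tau (P i.+1) - tau (P i)|).
Proof.
move=> k0 hc.
exists (interp P), 0, k%:R, k, (fun i => i%:R).
split; first exact: polygon.
split; first by rewrite -(interp_nat P 0).
split; first by rewrite interp_nat.
rewrite /null_length; apply: eq_bigr => i _; by rewrite !interp_nat.
Qed.

Lemma Aset_lb p q L : Aset p q L -> `|tau q - tau p| <= L.
Proof.
move=> [beta [a [b [k [s [[_ [s0 [sk _]]] [ha [hb ->]]]]]]]].
rewrite /null_length.
have -> : tau q - tau p = \sum_(i < k) (tau (beta (s i.+1)) - tau (beta (s i))).
  rewrite -(big_mkord xpredT (fun i => tau (beta (s i.+1)) - tau (beta (s i)))).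
  by rewrite telescope_sumr // s0 sk ha hb.
exact: ler_norm_sum.
Qed.

Lemma inf_eq (A : set R) c : (forall x, A x -> c <= x) ->
  (forall e, 0 < e -> exists x, A x /\ x < c + e) -> inf A = c.
Proof.
move=> lb ap.
have ne : nonempty A by have [x [Ax _]] := ap 1 ltr01; exists x.
have hl : has_lbound A by exists c => x; exact: lb.
apply/eqP; rewrite eq_le (lb_le_inf ne) ?andbT; last by move=> x; exact: lb.
rewrite leNgt; apply/negP => H.
have [x [Ax xlt]] : exists x, A x /\ x < c + (inf A - c) by apply: ap; rewrite subr_gt0.
have := ge_inf hl Ax.
lra.
Qed.

Definition Ssum (x0 x1 : 'I_n -> R) := \sum_(i < n) (x1 i - x0 i) ^+ 2.
Definition hh x0 x1 (N : nat) : R := (1 + Ssum x0 x1) * N%:R^-1.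
Definition Z x0 x1 (N : nat) (j : nat) : mpoint R n :=
  (if odd j then hh x0 x1 N else 0,
   fun i => x0 i + j%:R * ((x1 i - x0 i) * (N%:R^-1 / 2))).

Lemma Ssum_ge0 x0 x1 : 0 <= Ssum x0 x1.
Proof. by apply: sumr_ge0 => i _; exact: sqr_ge0. Qed.

Lemma hh_gt0 x0 x1 N : (0 < N)%N -> 0 < hh x0 x1 N.
Proof.
move=> N0; apply: mulr_gt0; last by rewrite invr_gt0 ltr0n.
have := Ssum_ge0 x0 x1; lra.
Qed.

Lemma Z0 x0 x1 N : Z x0 x1 N 0 = (0, x0).
Proof. rewrite /Z /=; congr pair; apply: funext => i; by rewrite mul0r addr0. Qed.

Lemma Zend x0 x1 N : (0 < N)%N -> Z x0 x1 N N.*2 = (0, x1).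
Proof.
move=> N0; rewrite /Z odd_double /=; congr pair; apply: funext => i.
have hN : N%:R != 0 :> R by rewrite pnatr_eq0 -lt0n.
rewrite -muln2 natrM.
field.
done.
Qed.

Lemma Zstep x0 x1 N j : (0 < N)%N -> causal_step (Z x0 x1 N j) (Z x0 x1 N j.+1).
Proof.
move=> N0; have hp := @hh_gt0 x0 x1 N N0.
have hS := Ssum_ge0 x0 x1.
set w := (N%:R^-1 : R).
have w0 : 0 < w by rewrite invr_gt0 ltr0n.
rewrite /causal_step; have -> : \sum_(i < n) ((Z x0 x1 N j.+1).2 i - (Z x0 x1 N j).2 i) ^+ 2
   = Ssum x0 x1 * (w / 2) ^+ 2.
  rewrite /Ssum mulr_suml; apply: eq_bigr => i _ /=.
  rewrite -exprMn; congr (_ ^+ 2); rewrite -/w. ring.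
rewrite /= /hh -/w; case: (odd j) => /=; split.
- by apply/eqP => E; rewrite /hh -/w in hp; lra.
- nra.
- by apply/eqP => E; rewrite /hh -/w in hp; lra.
- nra.
Qed.

Lemma Ztau x0 x1 N j : (0 < N)%N ->
  `|tau (Z x0 x1 N j.+1) - tau (Z x0 x1 N j)| = hh x0 x1 N ^+ 3.
Proof.
move=> N0; have hp := @hh_gt0 x0 x1 N N0.
rewrite /tau /= ; case: (odd j) => /=.
  by rewrite expr0n /= sub0r normrN gtr0_norm // exprn_gt0.
by rewrite expr0n /= subr0 gtr0_norm // exprn_gt0.
Qed.

Lemma Zsmall x0 x1 e : 0 < e -> exists N, (0 < N)%N /\ hh x0 x1 N ^+ 3 *+ N.*2 < e.
Proof.
move=> e0.
have hS := Ssum_ge0 x0 x1.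
set K := 2 * (1 + Ssum x0 x1) ^+ 3.
have K0 : 0 < K by apply: mulr_gt0 => //; apply: exprn_gt0; lra.
exists (Num.truncn (K / e)).+1; split => //.
set N := (Num.truncn (K / e)).+1.
have hN : K / e < N%:R by exact: truncnS_gt.
have N1 : 1 <= N%:R :> R by rewrite ler1n.
set w := (N%:R^-1 : R).
have Nw : N%:R * w = 1 by rewrite mulfV // pnatr_eq0.
have hKN : K < N%:R * e by rewrite -ltr_pdivrMr.
rewrite /hh -/w -mulr_natr -muln2 natrM.
have w0 : 0 < w by rewrite invr_gt0 ltr0n.
have -> : ((1 + Ssum x0 x1) * w) ^+ 3 * (N%:R * 2) = (K * w) * w * (N%:R * w).
  rewrite /K; ring.
rewrite Nw mulr1.
have h1 : K * w < N%:R * e * w by rewrite ltr_pM2r.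
have h2 : N%:R * e * w = e by rewrite mulrAC Nw mul1r.
have w1 : w <= 1 by nra.
have Kw0 : 0 < K * w by exact: mulr_gt0.
nra.
Qed.

Lemma Zsum x0 x1 N : (0 < N)%N ->
  \sum_(i < N.*2) `|tau (Z x0 x1 N i.+1) - tau (Z x0 x1 N i)| = hh x0 x1 N ^+ 3 *+ N.*2.
Proof.
move=> N0; under eq_bigr => i _ do rewrite Ztau //.
by rewrite sumr_const card_ord.
Qed.

Lemma part1 (p q : mpoint R n) : p.1 = 0 -> q.1 = 0 -> inf (Aset p q) = 0.
Proof.
move=> hp hq; apply: inf_eq.
  move=> x Ax; apply: le_trans (@Aset_lb p q x Ax); exact: normr_ge0.
move=> e e0; have [N [N0 hs]] := @Zsmall p.2 q.2 e e0.
exists (hh p.2 q.2 N ^+ 3 *+ N.*2); split; last by rewrite add0r.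
have := @poly_mem (Z p.2 q.2 N) N.*2.
rewrite Z0 Zend // Zsum //.
have -> : ((0 : R), p.2) = p by move: hp; case: (p) => ? ? /= ->.
have -> : ((0 : R), q.2) = q by move: hq; case: (q) => ? ? /= ->.
apply; first by rewrite double_gt0.
by move=> i _; exact: Zstep.
Qed.

Definition W (p q : mpoint R n) N (j : nat) : mpoint R n :=
  if j == 0%N then p else if (j <= N.*2.+1)%N then Z p.2 q.2 N j.-1 else q.

Lemma tau_neg (t : R) : t < 0 -> t ^+ 3 < 0.
Proof. move=> h; have -> : t ^+ 3 = t * (t * t) by rewrite !exprS expr0 mulr1. have h2 : 0 < (- t) * (t * t) by apply: mulr_gt0; nra.
lra. Qed.
Lemma tau_pos (t : R) : 0 < t -> 0 < t ^+ 3.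
Proof. move=> h; exact: exprn_gt0. Qed.

Lemma part2 (p q : mpoint R n) : p.1 < 0 < q.1 -> inf (Aset p q) = tau q - tau p.
Proof.
move=> /andP[hp hq].
have tp := @tau_neg _ hp; have tq := @tau_pos _ hq.
apply: inf_eq.
  move=> x Ax; have := @Aset_lb p q x Ax.
  rewrite /tau ger0_norm //; lra.
move=> e e0; have [N [N0 hs]] := @Zsmall p.2 q.2 e e0.
have := @poly_mem (W p q N) N.*2.+2.
have -> : W p q N 0 = p by [].
have -> : W p q N N.*2.+2 = q by rewrite /W /= ltnn.
move=> H; eexists; split.
  apply: H => // i hi.
  case: i hi => [|i] hi.
    rewrite /W /= Z0 /causal_step /=; split; first by rewrite lt_eqF.
    rewrite big1; last by move=> j _; rewrite subrr expr0n.
    exact: sqr_ge0.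
  case: (ltnP i N.*2) => hi2.
    have h1 : (i.+1 <= N.*2.+1)%N by rewrite ltnS ltnW.
    have h2 : (i.+2 <= N.*2.+1)%N by rewrite ltnS.
    rewrite /W /= h1 h2; exact: Zstep.
  have -> : i = N.*2 by move: hi hi2; rewrite -!muln2; lia.
  rewrite /W /= leqnn ltnn Zend //  /causal_step /=; split; first by rewrite lt_eqF.
  rewrite big1; last by move=> j _; rewrite subrr expr0n.
  exact: sqr_ge0.
rewrite -(big_mkord xpredT (fun i => `|tau (W p q N i.+1) - tau (W p q N i)|)).
rewrite big_nat_recl // big_nat_recr //=.
have E : \sum_(0 <= i < N.*2) `|tau (W p q N i.+2) - tau (W p q N i.+1)| = hh p.2 q.2 N ^+ 3 *+ N.*2.
  rewrite -(@Zsum p.2 q.2 N N0) -(big_mkord xpredT (fun i => `|tau (Z p.2 q.2 N i.+1) - tau (Z p.2 q.2 N i)|)).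
  apply: eq_big_nat => i /andP[_ hi2].
  have h1 : (i.+1 <= N.*2.+1)%N by rewrite ltnS ltnW.
  have h2 : (i.+2 <= N.*2.+1)%N by rewrite ltnS.
  by rewrite /W /= h1 h2.
rewrite E /W /= leqnn ltnn Z0 Zend // /tau /= expr0n /= sub0r subr0 normrN.
rewrite (ltr0_norm tp) (gtr0_norm tq); lra.
Qed.
End S.

Theorem proposition3p4 (R : realType) (n : nat) :
  ((forall p q : mpoint R n, p.1 = 0 -> q.1 = 0 -> dhat p q = 0) /\
   ((0 < n)%N -> exists p q : mpoint R n, p <> q /\ dhat p q = 0)) /\
  (forall p q : mpoint R n, p.1 < 0 < q.1 -> dhat p q = tau q - tau p).
Proof.
split; [split|].
- move=> p q hp hq; rewrite dhatE; exact: part1.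
- move=> n0.
  exists ((0 : R), (fun _ => 0)), ((0 : R), (fun _ => 1)); split.
    move=> [] /(congr1 (fun f => f (Ordinal n0))) /eqP; by rewrite eq_sym oner_eq0.
  by rewrite dhatE part1.
- move=> p q h; rewrite dhatE; exact: part2.
Qed.
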